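(* Let $G$ be a (simple) graph on $n$ vertices, let $p\in(0,1)$, and let $a\ge 1$ be an integer. Then \[|t_{K_{2,a}}(f_{p,G})|\le 2\nu_{p,G}^a+2n^{-2/3}.\]
   Context: For a finite set $V$, $\Omega_V$ is $V$ with the uniform probability measure. For a graph $G$, $W_G\colon\Omega_{V(G)}^2\to[0,1]$ is $W_G(x,y)=1$ if $xy\in E(G)$ and $0$ otherwise (in particular $W_G(x,x)=0$). For $p\in(0,1)$, $f_{p,G}(x,y)=W_G(x,y)-p$, and \[\nu_{p,G}=\max_{x\neq y\in V(G)}\max\big(0,\ \mathbb{E}_z f_{p,G}(x,z)f_{p,G}(z,y)\big),\] with $z$ uniform on $V(G)$. For a graph $H$ and bounded symmetric $W$ on a probability space $\Omega$, $t_H(W)=\int_{\Omega^{V(H)}}\prod_{v_1v_2\in E(H)}W(x_{v_1},x_{v_2})\,d\mathbf{x}$ (product measure); $K_{2,a}$ is the complete bipartite graph with parts of sizes $2$ and $a$, so $t_{K_{2,a}}(f)=\mathbb{E}_{x,y}\big(\mathbb{E}_zf(x,z)f(z,y)\big)^a$. *)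

(* Defs.v *)
From HB Require Import structures.
From mathcomp Require Import all_boot all_order all_algebra.
From mathcomp Require Import all_classical all_reals.
From mathcomp Require Import exp.
Set Implicit Arguments. Unset Strict Implicit. Unset Printing Implicit Defensive.
Import Order.TTheory GRing.Theory Num.Theory.
Local Open Scope ring_scope.

Definition simple_graph (T : finType) (e : rel T) : Prop :=
  (forall x y, e x y = e y x) /\ (forall x, ~~ e x x).

Section GraphDefs.
Variables (R : realType) (T : finType).

Definition nverts : R := (#|T|)%:R.

Definition unif_exp (g : T -> R) : R := (\sum_(z : T) g z) / nverts.

Definition W_G (e : rel T) (x y : T) : R := (e x y)%:R.

Definition f_pG (p : R) (e : rel T) (x y : T) : R := W_G e x y - p.

Definition codeg (f : T -> T -> R) (x y : T) : R := unif_exp (fun z => f x z * f z y).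

Definition nu_pG (p : R) (e : rel T) : R :=
  \big[Num.max/0]_(x : T) \big[Num.max/0]_(y : T | x != y)
     Num.max 0 (codeg (f_pG p e) x y).

Definition t_K2a (a : nat) (f : T -> T -> R) : R :=
  unif_exp (fun x => unif_exp (fun y => (codeg f x y) ^+ a)).

End GraphDefs.

(* Main.v *)
Require Import Defs.
From HB Require Import structures.
From mathcomp Require Import all_boot all_order all_algebra.
From mathcomp Require Import all_classical all_reals.
From mathcomp Require Import exp.
From mathcomp Require Import ring lra.
Import Order.TTheory GRing.Theory Num.Theory.
Local Open Scope ring_scope.

Lemma m_le1 (R : realFieldType) (n m : R) : 1 <= n -> 0 < m -> n * (m * m * m) = 1 -> m <= 1.
Proof.
move=> n1 m0 e; rewrite leNgt; apply/negP => m1.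
have h1 : 1 < m * m by nra.
have h2 : 1 < m * m * m by nra.
nra.
Qed.

Lemma even_arith (R : realFieldType) (n m nu w Sp Sm : R) :
  1 <= n -> 0 < m -> n * (m * m * m) = 1 -> 0 <= nu -> nu <= 1 -> 0 <= w -> w <= nu ->
  Sp <= n + n * n * (w * nu) -> 0 <= Sm -> Sp + Sm <= n * n ->
  (forall l, 0 < l -> 2 * Sm <= l * (n + n * n * w) + (n + n * n * (w * nu * nu)) / l) ->
  Sp + Sm <= (2 * (w * nu) + 2 * (m * m)) * (n * n).
Proof.
move=> n1 m0 e nu0 nu1 w0 wnu hSp Sm0 hS H.
have m1 := @m_le1 R n m n1 m0 e.
have n0 : 0 < n by lra.
have nm : n / m = n * n * (m * m).
  apply: (@mulIf _ m); first by rewrite gt_eqF.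
  rewrite divfK ?gt_eqF //.
  by transitivity (n * (n * (m * m * m))); [rewrite e mulr1 | ring].
have nm2 : n <= n * n * (m * m).
  rewrite -nm ler_pdivlMr //; nra.
have [num|num] := leP m nu.
- have nu0' : 0 < nu by lra.
  have := H nu nu0'.
  have -> : (n + n * n * (w * nu * nu)) / nu = n / nu + n * n * (w * nu).
    by field; rewrite gt_eqF.
  have r1 : n / nu <= n / m by rewrite ler_pM2l // lef_pV2 ?posrE.
  have r2 : nu * n <= n by nra.
  have r3 : nu * (n + n * n * w) = nu * n + n * n * (w * nu) by ring.
  nra.
- have := H m m0.
  have -> : (n + n * n * (w * nu * nu)) / m = n / m + n * n * (w * nu) * (nu / m).
    by field; rewrite gt_eqF.
  have q1 : nu / m <= 1 by rewrite ler_pdivrMr //; lra.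
  have q2 : n * n * (w * nu) * (nu / m) <= n * n * (w * nu).
    rewrite -[X in _ <= X]mulr1; apply: ler_pM => //.
      by apply: mulr_ge0; [nra | nra].
    by apply: divr_ge0; lra.
  have q3 : m * (n * n * w) <= n * n * (m * m).
    have : w <= m by lra.
    have : 0 <= n * n by nra.
    nra.
  have [hm|hm] := leP (m * m + 2 * m) 2.
  + have q4 : m * n <= 2 * n * n * (m * m) - 2 * n.
      have : n * (m * m + 2 * m) <= 2 * n by nra.
      have : n * n * (m * m) * m = n.
        by transitivity (n * (n * (m * m * m))); [ring | rewrite e mulr1].
      nra.
    nra.
  + have : 1 <= 2 * (m * m) by nra.
    have : 0 <= w * nu by nra.
    nra.
Qed.

Lemma odd_arith (R : realFieldType) (n m V Sc : R) :
  1 <= n -> 0 < m -> n * (m * m * m) = 1 -> 0 <= V ->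
  Sc <= n + n * n * V -> Sc <= (2 * V + 2 * (m * m)) * (n * n).
Proof.
move=> n1 m0 e V0 hS.
have m1 := @m_le1 R n m n1 m0 e.
have n0 : 0 < n by lra.
have nm2 : 1 <= n * (m * m).
  have h : n * (m * m) * m = 1 by rewrite -e; ring.
  nra.
have : n <= n * n * (m * m) by nra.
have : 0 <= n * n * V by nra.
nra.
Qed.

Lemma amgm_pt (R : realFieldType) (u l : R) k : 0 <= u -> 0 < l ->
  2 * u ^+ k.+1 <= l * u ^+ k + u ^+ k.+2 / l.
Proof.
move=> u0 l0.
have v0 : 0 <= u ^+ k by exact: exprn_ge0.
rewrite -subr_ge0.
have -> : l * u ^+ k + u ^+ k.+2 / l - 2 * u ^+ k.+1 =
    u ^+ k * ((l - u) ^+ 2 / l).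
  by rewrite !exprSr; field; rewrite gt_eqF.
by apply: mulr_ge0 => //; apply: divr_ge0; [exact: sqr_ge0 | exact: ltW].
Qed.

Section Helpers.
Variables (R : realType) (T : finType) (e : rel T) (p : R).
Hypotheses (Hsym : forall x y, e x y = e y x) (p0 : 0 < p) (p1 : p < 1).

Let f := f_pG p e.
Let c := codeg f.
Let n := nverts R T.
Definition S2 (g : T -> T -> R) := \sum_(x : T) \sum_(y : T) g x y.

Lemma f_sym x y : f x y = f y x.
Proof. by rewrite /f /f_pG /W_G Hsym. Qed.

Lemma aux_b1 : (-1 <= 1 - p <= 1) && (-1 <= 0 - p <= 1).
Proof. move: (p0) (p1) => ? ?. by apply/andP; split; apply/andP; split; lra. Qed.

Lemma f_bound x y : `|f x y| <= 1.
Proof.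
have /andP[h1 h2] := aux_b1.
rewrite /f /f_pG /W_G ler_norml; case: (e x y) => /=; rewrite ?mulr1n ?mulr0n.
  exact: h1.
exact: h2.
Qed.

Lemma n_ge0 : 0 <= n.
Proof. by rewrite /n /nverts ler0n. Qed.

Lemma c_bound x y : 0 < n -> `|c x y| <= 1.
Proof.
move=> n0; rewrite /c /codeg /unif_exp normrM normfV (gtr0_norm n0).
rewrite ler_pdivrMr // mul1r.
apply: le_trans (ler_norm_sum _ _ _) _.
apply: le_trans (_ : \sum_(z : T) (1:R) <= _).
  apply: ler_sum => z _; rewrite normrM -[1]mul1r.
  by apply: ler_pM => //; apply: f_bound.
by rewrite sumr_const /n /nverts.
Qed.

Lemma prod_cst k (x : R) : \prod_(i < k) x = x ^+ k.
Proof. by rewrite prodr_const card_ord. Qed.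

Lemma schur_raw k :
  0 <= \sum_(x : T) \sum_(y : T) (\sum_(z : T) f x z * f z y) ^+ k.
Proof.
have E : forall x y, (\sum_(z : T) f x z * f z y) ^+ k =
   \sum_(g : {ffun 'I_k -> T}) (\prod_(i < k) f x (g i)) * (\prod_(i < k) f y (g i)).
  move=> x y; rewrite -prod_cst bigA_distr_bigA /=.
  apply: eq_bigr => g _; rewrite -big_split /=.
  by apply: eq_bigr => i _; rewrite (f_sym (g i) y).
under eq_bigr => x _ do under eq_bigr => y _ do rewrite E.
under eq_bigr => x _ do rewrite exchange_big /=.
rewrite exchange_big /=; apply: sumr_ge0 => g _.
under eq_bigr => x _ do rewrite -mulr_sumr.
rewrite -mulr_suml -expr2.
exact: sqr_ge0.
Qed.

Lemma schur k : 0 <= S2 (fun x y => c x y ^+ k).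
Proof.
have -> : S2 (fun x y => c x y ^+ k) =
    (\sum_(x : T) \sum_(y : T) (\sum_(z : T) f x z * f z y) ^+ k) * (n^-1) ^+ k.
  rewrite /S2 mulr_suml; apply: eq_bigr => x _; rewrite mulr_suml; apply: eq_bigr => y _.
  by rewrite /c /codeg /unif_exp exprMn.
by apply: mulr_ge0; [exact: schur_raw | rewrite exprn_ge0 // invr_ge0 n_ge0].
Qed.

Definition cp x y := Num.max 0 (c x y).
Definition cm x y := Num.max 0 (- c x y).

Lemma cp_ge0 x y : 0 <= cp x y.
Proof. by rewrite /cp le_max lexx. Qed.

Lemma cm_ge0 x y : 0 <= cm x y.
Proof. by rewrite /cm le_max lexx. Qed.

Lemma pow_split k x y : (0 < k)%N ->
  c x y ^+ k = cp x y ^+ k + (-1) ^+ k * cm x y ^+ k.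
Proof.
move=> k0; have [h|h] := leP 0 (c x y).
  have -> : cp x y = c x y by exact: max_r h.
  have -> : cm x y = 0 by apply: max_l; rewrite oppr_le0.
  by rewrite expr0n eqn0Ngt k0 /= mulr0 addr0.
have -> : cp x y = 0 by exact: max_l (ltW h).
have -> : cm x y = - c x y by apply: max_r; rewrite oppr_ge0 (ltW h).
by rewrite expr0n eqn0Ngt k0 /= add0r -exprMn mulN1r opprK.
Qed.

Lemma pow_odd j x y :
  c x y ^+ j.*2.+1 = cp x y ^+ j.*2.+1 - cm x y ^+ j.*2.+1.
Proof. by rewrite pow_split // -signr_odd /= odd_double /= expr1 mulN1r. Qed.

Lemma pow_even j x y :
  c x y ^+ (j.+1).*2 = cp x y ^+ (j.+1).*2 + cm x y ^+ (j.+1).*2.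
Proof. by rewrite pow_split ?double_gt0 // -signr_odd odd_double expr0 mul1r. Qed.

Lemma S2B (g h : T -> T -> R) : S2 (fun x y => g x y - h x y) = S2 g - S2 h.
Proof.
rewrite /S2 -sumrB; apply: eq_bigr => x _; by rewrite sumrB.
Qed.

Lemma S2D (g h : T -> T -> R) : S2 (fun x y => g x y + h x y) = S2 g + S2 h.
Proof.
rewrite /S2 -big_split; apply: eq_bigr => x _; by rewrite big_split.
Qed.

Lemma S2_ge0 (g : T -> T -> R) : (forall x y, 0 <= g x y) -> 0 <= S2 g.
Proof. by move=> h; apply: sumr_ge0 => x _; apply: sumr_ge0 => y _. Qed.

Lemma cm_le_cp_odd j :
  S2 (fun x y => cm x y ^+ j.*2.+1) <= S2 (fun x y => cp x y ^+ j.*2.+1).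
Proof.
have E : S2 (fun x y => c x y ^+ j.*2.+1) =
    S2 (fun x y => cp x y ^+ j.*2.+1 - cm x y ^+ j.*2.+1).
  by rewrite /S2; apply: eq_bigr => x _; apply: eq_bigr => y _; exact: pow_odd.
by move: (schur j.*2.+1); rewrite E S2B subr_ge0.
Qed.

Let nu := nu_pG p e.

Lemma nu_ge0 : 0 <= nu.
Proof. exact: bigmax_ge_id. Qed.

Lemma nu_le1 : 0 < n -> nu <= 1.
Proof.
move=> n0; apply: bigmax_le => // x _; apply: bigmax_le => // y _.
rewrite ge_max ler01 /=.
exact: le_trans (ler_norm _) (c_bound x y n0).
Qed.

Lemma cp_le_nu x y : x != y -> cp x y <= nu.
Proof.
move=> xy; apply: le_trans (le_bigmax _ _ x).
exact: (le_bigmax_cond _ (P := fun y => x != y)).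
Qed.

Lemma cp_le1 x y : 0 < n -> cp x y <= 1.
Proof.
move=> n0; rewrite /cp ge_max ler01 /=.
exact: le_trans (ler_norm _) (c_bound x y n0).
Qed.

Lemma Scp_le k : 0 < n -> S2 (fun x y => cp x y ^+ k) <= n + n * n * nu ^+ k.
Proof.
move=> n0; rewrite /S2.
apply: le_trans (_ : \sum_(x : T) (1 + n * nu ^+ k) <= _); last first.
  rewrite sumr_const -mulr_natr -[(#|T|)%:R]/n.
  rewrite mulrDl mul1r [n * nu ^+ k * n]mulrC mulrA; exact: lexx.
apply: ler_sum => x _; rewrite (bigD1 x) //=; apply: lerD.
  by apply: exprn_ile1; [exact: cp_ge0 | exact: cp_le1].
apply: le_trans (_ : \sum_(y : T | y != x) nu ^+ k <= _).
  apply: ler_sum => y hy; apply: lerXn2r; rewrite ?nnegrE ?cp_ge0 ?nu_ge0 //.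
  by apply: cp_le_nu; rewrite eq_sym.
apply: le_trans (_ : \sum_(y : T) nu ^+ k <= _).
  by rewrite [X in _ <= X](bigD1 x) //= lerDr exprn_ge0 // nu_ge0.
by rewrite sumr_const -mulr_natr mulrC lexx.
Qed.

Lemma t_eq a : t_K2a a f = S2 (fun x y => c x y ^+ a) / n / n.
Proof. by rewrite /t_K2a /unif_exp /S2 -mulr_suml. Qed.

Lemma S2_le_nn k : 0 < n -> S2 (fun x y => c x y ^+ k) <= n * n.
Proof.
move=> n0; rewrite /S2.
apply: le_trans (_ : \sum_(x : T) \sum_(y : T) (1 : R) <= _).
  apply: ler_sum => x _; apply: ler_sum => y _.
  apply: le_trans (ler_norm _) _; rewrite normrX.
  by apply: exprn_ile1 => //; exact: c_bound.
under eq_bigr do rewrite sumr_const.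
rewrite sumr_const -[(1 *+ #|T|)]/n -mulr_natr lexx //.
Qed.

Lemma S2_le (g h : T -> T -> R) : (forall x y, g x y <= h x y) -> S2 g <= S2 h.
Proof. by move=> H; apply: ler_sum => x _; apply: ler_sum => y _; exact: H. Qed.

Lemma S2Z (l : R) (g : T -> T -> R) : S2 (fun x y => l * g x y) = l * S2 g.
Proof. by rewrite /S2 mulr_sumr; apply: eq_bigr => x _; rewrite mulr_sumr. Qed.

Lemma S2V (l : R) (g : T -> T -> R) : S2 (fun x y => g x y / l) = S2 g / l.
Proof. by rewrite /S2 mulr_suml; apply: eq_bigr => x _; rewrite mulr_suml. Qed.

Lemma main_sec a : (1 <= a)%N ->
  `|t_K2a a f| <= 2 * nu ^+ a + 2 * (n `^ (- (2 / 3))).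
Proof.
move=> a1.
have [n0|n0] : n = 0 \/ 0 < n.
  by have := n_ge0; rewrite le_eqVlt => /orP[/eqP<-|->]; [left|right].
  rewrite t_eq n0 invr0 !mulr0 normr0.
  apply: addr_ge0; apply: mulr_ge0 => //; [exact: exprn_ge0 (nu_ge0) | exact: powR_ge0].
have n1 : 1 <= n.
  by move: n0; rewrite /n /nverts ltr0n ler1n.
set m := n `^ (- (1 / 3)).
have m0 : 0 < m by exact: powR_gt0.
have em : n * (m * m * m) = 1.
  have -> : m * m * m = m ^+ 3 by rewrite !exprS expr0 mulr1 mulrA.
  rewrite -powR_mulrn ?ltW // -powRrM.
  have -> : - (1 / 3) * 3%:R = - 1 :> R by field.
  by rewrite powR_inv1 ?ltW // mulfV // gt_eqF.
have -> : n `^ (- (2 / 3)) = m * m.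
  rewrite -expr2 -powR_mulrn ?ltW // -powRrM.
  by congr (_ `^ _); field.
rewrite t_eq.
have Sc_ge0 : forall k, 0 <= S2 (fun x y => c x y ^+ k) := schur.
rewrite ger0_norm; last by apply: divr_ge0; [apply: divr_ge0 => //|]; exact: ltW.
rewrite !ler_pdivrMr // -mulrA.
have nu0 := nu_ge0; have nu1 := nu_le1 n0.
case: (boolP (odd a)) => oa.
  have ea : a = (a./2).*2.+1 by rewrite -[LHS]odd_double_half oa.
  rewrite ea; set j := a./2.
  apply: odd_arith => //; first exact: exprn_ge0.
  apply: le_trans (Scp_le _ n0).
  have E : S2 (fun x y => c x y ^+ j.*2.+1) =
      S2 (fun x y => cp x y ^+ j.*2.+1 - cm x y ^+ j.*2.+1).
    by rewrite /S2; apply: eq_bigr => x _; apply: eq_bigr => y _; exact: pow_odd.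
  rewrite E S2B lerBlDr lerDl; apply: S2_ge0 => x y; exact: exprn_ge0 (cm_ge0 _ _).
have ea : a = (a./2).*2 by rewrite -[LHS]odd_double_half (negbTE oa).
move: ea; case ej: (a./2) => [|j] ea; first by rewrite ea in a1.
rewrite ea.
have E : S2 (fun x y => c x y ^+ j.+1.*2) =
    S2 (fun x y => cp x y ^+ j.+1.*2) + S2 (fun x y => cm x y ^+ j.+1.*2).
  rewrite -S2D /S2; apply: eq_bigr => x _; apply: eq_bigr => y _; exact: pow_even.
have hle := S2_le_nn (j.+1).*2 n0.
rewrite E in hle *.
have -> : nu ^+ j.+1.*2 = nu ^+ j.*2.+1 * nu by rewrite doubleS exprSr.
apply: even_arith => //.
- exact: exprn_ge0.
- rewrite exprSr -[X in _ <= X]mul1r; apply: ler_wpM2r => //; exact: exprn_ile1.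
- by rewrite -exprSr -doubleS; apply: Scp_le.
- by apply: S2_ge0 => x y; exact: exprn_ge0 (cm_ge0 _ _).
move=> l l0.
have A1 := cm_le_cp_odd j.
have A2 := cm_le_cp_odd j.+1.
have B1 := Scp_le j.*2.+1 n0.
have B2 := Scp_le j.+1.*2.+1 n0.
apply: le_trans (_ : l * S2 (fun x y => cm x y ^+ j.*2.+1) +
                     S2 (fun x y => cm x y ^+ j.+1.*2.+1) / l <= _).
  rewrite -S2Z -S2V -S2Z -S2D; apply: S2_le => x y.
  rewrite doubleS; exact: amgm_pt (cm_ge0 x y) l0.
apply: lerD.
  by rewrite ler_pM2l //; apply: le_trans A1 B1.
rewrite ler_pM2r ?invr_gt0 //.
apply: le_trans A2 _; apply: le_trans B2 _.
by rewrite doubleS !exprSr mulrA.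
Qed.

End Helpers.

Theorem proposition3p6 (R : realType) (T : finType) (e : rel T) (p : R) (a : nat) :
  simple_graph e -> 0 < p -> p < 1 -> (1 <= a)%N ->
  `| t_K2a a (f_pG p e) | <=
    2 * (nu_pG p e) ^+ a + 2 * ((nverts R T) `^ (- (2 / 3))).
Proof.
move=> [Hsym _] p0 p1 a1.
by apply: main_sec.
Qed.
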